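(* Let $(s_1,s_2)$ and $(s'_1,s'_2)$ be two ordered pairs of involutive elements of $S_n$ and $\beta,\beta'$ their dihedral decompositions. Then $(s_1,s_2)$ is conjugate to $(s'_1,s'_2)$ (i.e. $s'_i=gs_ig^{-1}$, $i=1,2$, for some $g\in S_n$) if and only if $\beta=\beta'$.
   Context: An involutive element is $s\in S_n$ with $s^2=1$ (the identity included). Given an ordered pair $(s_1,s_2)$ of involutions, the infinite dihedral group $D_\infty=\langle\sigma_1,\sigma_2\mid\sigma_1^2=\sigma_2^2=1\rangle$ acts on $\{1,\dots,n\}$ via $\sigma_i\mapsto s_i$. Each orbit is of one of four types: type 1: neither $\sigma_1$ nor $\sigma_2$ has a fixed point in it (even size); type 2: each of $\sigma_1,\sigma_2$ has exactly one fixed point (odd size); type 3: $\sigma_1$ has two fixed points and $\sigma_2$ none (even size); type 4: $\sigma_1$ has none and $\sigma_2$ has two fixed points (even size). The dihedral decomposition of $(s_1,s_2)$ is the collection, for each type $t=1,2,3,4$, of the unordered multiset of sizes of the orbits of type $t$. *)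

(* Defs.v *)
From mathcomp Require Import all_boot all_order all_fingroup.
Set Implicit Arguments. Unset Strict Implicit. Unset Printing Implicit Defensive.


(* Elements of S_n are permutations of 'I_n = {0,..,n-1}. *)
Definition involutive_perm (n : nat) (s : {perm 'I_n}) : Prop := (s * s = 1)%g.

Section Dihedral.
Variables (n : nat) (s1 s2 : {perm 'I_n}).

(* the image of D_infinity = <sigma1, sigma2> acting via sigma_i |-> s_i *)
Definition dih_group : {group {perm 'I_n}} := <<[set s1; s2]>>%G.

Definition dih_orbits : {set {set 'I_n}} :=
  [set orbit 'P dih_group x | x : 'I_n].

Definition nfix (s : {perm 'I_n}) (O : {set 'I_n}) : nat :=
  #|[set x in O | s x == x]|.

Definition orbit_type (O : {set 'I_n}) : nat :=
  match (nfix s1 O, nfix s2 O) with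
  | (0, 0) => 1%N
  | (1, 1) => 2%N
  | (2, 0) => 3%N
  | (0, 2) => 4%N
  | _ => 0%N
  end.

(* unordered multiset of sizes of orbits of type t, as a sorted list *)
Definition sizes_of_type (t : nat) : seq nat :=
  sort leq (map (fun O : {set 'I_n} => #|O|) (enum [set O in dih_orbits | orbit_type O == t :> nat])).

Definition dihedral_decomposition : seq (seq nat) :=
  [seq sizes_of_type t | t <- [:: 1; 2; 3; 4]].
End Dihedral.

(* Main.v *)
Require Import Defs.
From mathcomp Require Import all_boot all_order all_fingroup.
From mathcomp Require Import zify.
Set Warnings "-notation-overridden".
Set Implicit Arguments. Unset Strict Implicit. Unset Printing Implicit Defensive.

Notation ford := fingraph.order.
Section IterMod.
Variables (T : finType) (f : T -> T).
Hypothesis finj : injective f.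

Lemma iter_mulc x q : iter (q * ford f x) f x = x.
Proof. elim: q => [//|q IH]; by rewrite mulSn iterD IH iter_order. Qed.

Lemma iter_mod x j : iter j f x = iter (j %% ford f x) f x.
Proof. by rewrite {1}(divn_eq j (ford f x)) addnC iterD iter_mulc. Qed.

Lemma iter_eqE x i j : (iter i f x == iter j f x) = (i %% ford f x == j %% ford f x).
Proof.
rewrite (iter_mod x i) (iter_mod x j).
have o0 := fingraph.order_gt0 f x.
apply/eqP/eqP => [E|->//].
by rewrite -(findex_iter (ltn_pmod i o0)) E findex_iter // ltn_pmod.
Qed.

Lemma iter_injn k : injective (iter k f).
Proof. elim: k => [//|k IH] a b /=; by move/finj/IH. Qed.

Lemma fconnectP x y : fconnect f x y -> exists2 j, j < ford f x & y = iter j f x.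
Proof. move=> H; exists (findex f x y); [exact: findex_max| by rewrite iter_findex]. Qed.

Lemma fconnect_trans x y z : fconnect f x y -> fconnect f y z -> fconnect f x z.
Proof. exact: connect_trans. Qed.

Lemma fconnect_symE x y : fconnect f x y = fconnect f y x.
Proof. exact: fconnect_sym. Qed.

End IterMod.
Lemma half_lt c : 0 < c -> c./2 < c.
Proof. move=> c0; lia. Qed.

Lemma cnt0 c : 0 < c -> #|[set j : 'I_c | (j + j) %% c == 0]| = if odd c then 1 else 2.
Proof.
move=> c0.
have E (j : nat) : j < c -> ((j + j) %% c == 0) =
    (if odd c then j == 0 else (j == 0) || (j == c./2)).
  move=> jc; rewrite -/(dvdn c (j+j)) addnn -muln2.
  case oc: (odd c).
    by rewrite Gauss_dvdl ?coprimen2 // /dvdn modn_small.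
  have cE : c = c./2 * 2 by rewrite muln2 halfK oc subn0.
  rewrite {1}cE dvdn_pmul2r //.
  apply/idP/idP.
    case/dvdnP => k jE.
    have : k < 2 by rewrite cE jE in jc; nia.
    by case: k jE => [|[|]] //= ->; rewrite ?mul0n ?mul1n eqxx ?orbT.
  by case/orP => /eqP ->; rewrite ?dvdn0 ?dvdnn.
case oc: (odd c).
  rewrite -(cards1 (Ordinal c0)); apply: eq_card => j.
  by rewrite !inE E // oc -val_eqE.
have h0 : 0 < c./2 by lia.
have ne : Ordinal c0 != Ordinal (half_lt c0) by rewrite -val_eqE /= eq_sym -lt0n.
rewrite -[2]/((true).+1) -ne -cards2.
apply: eq_card => j; by rewrite !inE E // oc -!val_eqE.
Qed.

Definition rr n (u v : {perm 'I_n}) : 'I_n -> 'I_n := fun x => v (u x).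

Section Pair.
Variable n : nat.
Variables u v : {perm 'I_n}.
Hypothesis uu : forall x, u (u x) = x.
Hypothesis vv : forall x, v (v x) = x.
Local Notation r := (rr u v).
Local Notation G := (dih_group u v).

Lemma r_inj : injective r.
Proof. move=> a b; rewrite /rr => /perm_inj /perm_inj //. Qed.

Lemma rur z : r (u (r z)) = u z.
Proof. by rewrite /rr uu vv. Qed.

Lemma iter_u j y : iter j r (u (iter j r y)) = u y.
Proof.
elim: j => [//|j IH]. by rewrite iterSr iterS rur.
Qed.

Lemma cyc_u x y : fconnect r x y -> fconnect r (u y) (u x).
Proof.
case/fconnectP => j _ ->.
by rewrite -[X in fconnect _ _ X](iter_u j x) fconnect_iter.
Qed.

Lemma v_ru y : v y = r (u y).
Proof. by rewrite /rr uu. Qed.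

Lemma iter_perm j x : iter j r x = ((u * v) ^+ j)%g x.
Proof. rewrite permX; elim: j => [//|j IH]; by rewrite !iterS IH permM. Qed.

Lemma u_in : u \in G.
Proof. by rewrite mem_gen // set21. Qed.
Lemma v_in : v \in G.
Proof. by rewrite mem_gen // set22. Qed.

Lemma dih_orbitE x y :
  (y \in orbit 'P G x) = fconnect r x y || fconnect r (u x) y.
Proof.
apply/idP/idP.
  set U := [set y | fconnect r x y || fconnect r (u x) y].
  have Uu : forall y, y \in U -> u y \in U.
    move=> z; rewrite !inE => /orP [H|H].
      by rewrite [fconnect r (u x) _](fconnect_symE r_inj) (cyc_u H) orbT.
    by move: (cyc_u H); rewrite uu (fconnect_symE r_inj) => ->.
  have Ur : forall y, y \in U -> r y \in U.
    move=> z; rewrite !inE => /orP [H|H].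
      by rewrite (fconnect_trans H (fconnect1 _ _)).
    by rewrite (fconnect_trans H (fconnect1 _ _)) orbT.
  have NU : forall w : {perm 'I_n}, (forall y, y \in U -> w y \in U) -> (forall y, w (w y) = y) ->
      w \in 'N(U | 'P)%g.
    move=> w Hw ww; apply/astabsP => z /=; rewrite apermE.
    apply/idP/idP; last exact: Hw.
    by move/Hw; rewrite ww.
  have uN : u \in 'N(U | 'P)%g by apply: NU.
  have vN : v \in 'N(U | 'P)%g.
    apply: NU => // z Hz; rewrite v_ru; exact/Ur/Uu.
  have GN : G \subset 'N(U | 'P)%g.
    by rewrite /dih_group gen_subG subUset !sub1set uN vN.
  case/orbitP => a aG <-.
  have xU : x \in U by rewrite inE connect0.
  have := astabsP (subsetP GN a aG) x.
  by rewrite xU inE.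
have uvG : (u * v)%g \in G by rewrite groupM ?u_in ?v_in.
case/orP => /fconnectP [j _ ->]; rewrite iter_perm.
  by apply/orbitP; exists ((u * v) ^+ j)%g; rewrite ?groupX.
apply/orbitP; exists (u * (u * v) ^+ j)%g; first by rewrite groupM ?groupX ?u_in.
rewrite /= apermE permM. done.
Qed.

Local Notation O x := (orbit 'P G x).

Lemma fixA_mem x0 : u x0 = x0 -> forall y, (y \in O x0) = fconnect r x0 y.
Proof. by move=> H y; rewrite dih_orbitE H orbb. Qed.

Lemma fixA_card x0 : u x0 = x0 -> #|O x0| = ford r x0.
Proof. by move=> H; apply: eq_card => y; rewrite fixA_mem. Qed.

Lemma u_fix_iff x0 j : u x0 = x0 ->
  (u (iter j r x0) == iter j r x0) = ((j + j) %% ford r x0 == 0).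
Proof.
move=> H; rewrite -(inj_eq (@iter_injn _ _ r_inj j)) iter_u H -iterD.
by rewrite -[X in X == _]/(iter 0 r x0) (iter_eqE r_inj) mod0n eq_sym.
Qed.

Lemma v_fix_iff x0 j : u x0 = x0 ->
  (v (iter j r x0) == iter j r x0) = ((j + j) %% ford r x0 == 1 %% ford r x0).
Proof.
move=> H; rewrite v_ru -(inj_eq (@iter_injn _ _ r_inj j)) -iterSr iterS iter_u H -iterD.
by rewrite -[X in X == _]/(iter 1 r x0) (iter_eqE r_inj) eq_sym.
Qed.

Lemma nfix_u_A x0 : u x0 = x0 -> nfix u (O x0) = if odd #|O x0| then 1 else 2.
Proof.
move=> H; rewrite fixA_card // -cnt0 ?fingraph.order_gt0 // /nfix.
set c := ford r x0.
have F : injective (fun j : 'I_c => iter j r x0).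
  move=> i j /eqP; rewrite (iter_eqE r_inj) !modn_small // => /eqP; apply: val_inj.
rewrite -(card_imset _ F); apply: eq_card => y; rewrite !inE fixA_mem //.
apply/andP/imsetP.
  case=> /fconnectP [j jc ->] fx; exists (Ordinal jc) => //.
  by rewrite inE -u_fix_iff.
case=> j; rewrite inE => Hj ->; split; first exact: fconnect_iter.
by rewrite u_fix_iff.
Qed.

Lemma nfix_v_A_even x0 : u x0 = x0 -> ~~ odd #|O x0| -> nfix v (O x0) = 0.
Proof.
move=> H; rewrite fixA_card // => Hodd.
have c0 := fingraph.order_gt0 r x0.
have c1 : ford r x0 != 1 by apply: contraNneq Hodd => ->.
apply/eqP; rewrite cards_eq0; apply/eqP/setP => y; rewrite !inE fixA_mem //.
apply/negP; case/andP => /fconnectP [j jc ->]; rewrite v_fix_iff //.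
move/eqP/(congr1 odd); rewrite odd_mod ?(negbTE Hodd) // addnn odd_double modn_small //.
lia.
Qed.

Lemma v_fix_exists x a : u x = iter a r x -> odd a ->
  v (iter (a./2).+1 r x) = iter (a./2).+1 r x.
Proof.
move=> Hx Ho; apply: (@iter_injn _ _ r_inj (a./2).+1).
rewrite v_ru -iterSr iterS iter_u Hx -iterS -iterD.
have E : a = (a./2).*2 + 1 by rewrite -{1}(odd_double_half a) Ho addnC.
by have -> : (a./2).+1 + (a./2).+1 = a.+1 by lia.
Qed.

Lemma u_fix_exists x a : u x = iter a r x -> ~~ odd a ->
  u (iter a./2 r x) = iter a./2 r x.
Proof.
move=> Hx Ho; apply: (@iter_injn _ _ r_inj a./2).
rewrite iter_u Hx -iterD.
have E : a = (a./2).*2 by rewrite -{1}(odd_double_half a) (negbTE Ho).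
by have -> : a./2 + a./2 = a by lia.
Qed.

Lemma noFix x : (forall y, y \in O x -> u y != y) -> (forall y, y \in O x -> v y != y) ->
  ~~ fconnect r x (u x).
Proof.
move=> Hu Hv; apply/negP => /fconnectP [a _ Ha].
case: (boolP (odd a)) => Ho.
  have := Hv (iter (a./2).+1 r x); rewrite dih_orbitE fconnect_iter v_fix_exists //.
  by rewrite eqxx => /(_ isT).
have := Hu (iter (a./2) r x); rewrite dih_orbitE fconnect_iter u_fix_exists //.
by rewrite eqxx => /(_ isT).
Qed.

Lemma ford_u_le y : ford r (u y) <= ford r y.
Proof.
rewrite /fingraph.order.
have -> : #|fconnect r (u y)| = #|[set z | fconnect r (u y) z]|.
  by apply: eq_card => z; rewrite inE.
rewrite -(card_imset _ (@perm_inj _ u)).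
apply: subset_leq_card; apply/subsetP => z /imsetP [w]; rewrite inE => Hw ->.
have := cyc_u Hw; rewrite uu (fconnect_symE r_inj) => H; exact: H.
Qed.

Lemma ford_u y : ford r (u y) = ford r y.
Proof.
apply/eqP; rewrite eqn_leq ford_u_le /=.
by rewrite -{1}(uu y) ford_u_le.
Qed.

Lemma caseB_card x : ~~ fconnect r x (u x) -> #|O x| = (ford r x).*2.
Proof.
move=> Hx.
have -> : #|O x| = #|[predU fconnect r x & fconnect r (u x)]|.
  by apply: eq_card => y; rewrite dih_orbitE !inE.
have := cardUI (fconnect r x) (fconnect r (u x)).
have -> : #|[predI fconnect r x & fconnect r (u x)]| = 0.
  apply: eq_card0 => z; rewrite !inE; apply/negP => /andP [H1 H2].
  move: Hx; rewrite (fconnect_trans H1 _) //.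
  by rewrite (fconnect_symE r_inj).
rewrite addn0 => ->.
by rewrite -[#|fconnect r (u x)|]/(ford r (u x)) ford_u addnn.
Qed.

End Pair.

Lemma mod_compl j c : 0 < c -> (j + (c - j %% c)) %% c = 0.
Proof.
move=> c0; rewrite {1}(divn_eq j c) -addnA subnKC ?(ltnW (ltn_pmod _ c0)) //.
by rewrite -mulSnr modnMl.
Qed.

Section PairMore.
Variable n : nat.
Variables u v : {perm 'I_n}.
Hypothesis uu : forall x, u (u x) = x.
Hypothesis vv : forall x, v (v x) = x.
Local Notation r := (rr u v).
Local Notation O x := (orbit 'P (dih_group u v) x).

Lemma u_iter_fix x0 j : u x0 = x0 ->
  u (iter j r x0) = iter (ford r x0 - j %% ford r x0) r x0.
Proof.
move=> H; apply: (@iter_injn _ _ (@r_inj _ u v) j).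
rewrite iter_u // H -iterD (iter_mod (@r_inj _ u v) _ (j + _)) mod_compl //.
Qed.

Lemma cyc_u' x y : fconnect r x y -> fconnect r (u x) (u y).
Proof. by move/(cyc_u uu vv); rewrite (fconnect_symE (@r_inj _ u v)). Qed.

Lemma cyc_u2 x y : fconnect r (u x) y -> fconnect r x (u y).
Proof. by move/cyc_u'; rewrite uu. Qed.

Lemma caseB_out x y : ~~ fconnect r x (u x) -> fconnect r x y -> ~~ fconnect r x (u y).
Proof.
move=> Hx Hy; apply: contra Hx => H.
apply: fconnect_trans H _; rewrite (fconnect_symE (@r_inj _ u v)); exact: cyc_u'.
Qed.

Lemma fconnect_rinv x y : fconnect r x (r y) -> fconnect r x y.
Proof.
move=> H; apply: fconnect_trans H _.
by rewrite (fconnect_symE (@r_inj _ u v)) fconnect1.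
Qed.

End PairMore.

Section Iso.
Variable n : nat.
Variables u v u' v' : {perm 'I_n}.
Hypothesis uu : forall x, u (u x) = x.
Hypothesis vv : forall x, v (v x) = x.
Hypothesis uu' : forall x, u' (u' x) = x.
Hypothesis vv' : forall x, v' (v' x) = x.
Local Notation r := (rr u v).
Local Notation r' := (rr u' v').
Local Notation O x := (orbit 'P (dih_group u v) x).
Local Notation O' x := (orbit 'P (dih_group u' v') x).

Variables x0 x0' : 'I_n.
Hypothesis ceq : ford r x0 = ford r' x0'.

Definition phi1 y := iter (findex r x0 y) r' x0'.

Lemma phi1_iter j : phi1 (iter j r x0) = iter j r' x0'.
Proof.
rewrite /phi1 (iter_mod (@r_inj _ u v) x0 j) findex_iter ?ltn_pmod ?fingraph.order_gt0 //.
by rewrite ceq -(iter_mod (@r_inj _ u' v')).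
Qed.

Lemma phi1_in y : fconnect r x0 y -> fconnect r' x0' (phi1 y).
Proof. move=> _; exact: fconnect_iter. Qed.

Lemma phi1_inj : {in fconnect r x0 &, injective phi1}.
Proof.
move=> y1 y2 /fconnectP [i _ ->] /fconnectP [j _ ->]; rewrite !phi1_iter.
move/eqP; rewrite (iter_eqE (@r_inj _ u' v')) -ceq -(iter_eqE (@r_inj _ u v)).
by move/eqP.
Qed.

Lemma phi1_r y : fconnect r x0 y -> phi1 (r y) = r' (phi1 y).
Proof. by case/fconnectP => j _ ->; rewrite -iterS !phi1_iter. Qed.

Lemma phi1_u y : u x0 = x0 -> u' x0' = x0' -> fconnect r x0 y -> phi1 (u y) = u' (phi1 y).
Proof.
move=> H H' /fconnectP [j _ ->].
by rewrite phi1_iter (u_iter_fix uu vv) // phi1_iter (u_iter_fix uu' vv') // ceq.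
Qed.

Definition phi2 y := if fconnect r x0 y then phi1 y else u' (phi1 (u y)).

Hypothesis hB : ~~ fconnect r x0 (u x0).
Hypothesis hB' : ~~ fconnect r' x0' (u' x0').
Local Notation D y := (fconnect r x0 y || fconnect r (u x0) y).
Local Notation D' y := (fconnect r' x0' y || fconnect r' (u' x0') y).

Lemma D_u y : D y -> D (u y).
Proof.
case/orP => H; first by rewrite (cyc_u' uu vv H) orbT.
by rewrite (cyc_u2 uu vv H).
Qed.

Lemma phi2_u y : D y -> phi2 (u y) = u' (phi2 y).
Proof.
rewrite /phi2; case: (boolP (fconnect r x0 y)) => Hy /= Hd.
  by rewrite (negbTE (caseB_out uu vv hB Hy)) uu.
by rewrite (cyc_u2 uu vv Hd) uu'.
Qed.

Lemma phi2_r y : D y -> phi2 (r y) = r' (phi2 y).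
Proof.
rewrite /phi2; case: (boolP (fconnect r x0 y)) => Hy /= Hd.
  by rewrite (fconnect_trans Hy (fconnect1 _ _)) phi1_r.
have Hry : ~~ fconnect r x0 (r y) by apply: contra Hy; apply: fconnect_rinv.
rewrite (negbTE Hry).
have Hury : fconnect r x0 (u (r y)).
  by apply: (cyc_u2 uu vv); apply: fconnect_trans Hd (fconnect1 _ _).
by rewrite -(rur uu vv y) phi1_r // (rur uu' vv').
Qed.

Lemma phi2_v y : D y -> phi2 (v y) = v' (phi2 y).
Proof.
move=> Hd; rewrite (@v_ru _ u v uu) phi2_r ?D_u // phi2_u //.
by rewrite (@v_ru _ u' v' uu').
Qed.

Lemma phi2_in y : D y -> D' (phi2 y).
Proof.
rewrite /phi2; case: (boolP (fconnect r x0 y)) => Hy /= Hd.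
  by rewrite phi1_in.
by rewrite (cyc_u' uu' vv' (phi1_in _)) ?orbT // (cyc_u2 uu vv Hd).
Qed.

Lemma phi2_inj : {in [pred y | D y] &, injective phi2}.
Proof.
have out : forall z, fconnect r' x0' z -> ~~ fconnect r' x0' (u' z).
  by move=> z; apply: caseB_out.
move=> y1 y2; rewrite !inE /phi2.
case: (boolP (fconnect r x0 y1)) => H1 /= D1;
case: (boolP (fconnect r x0 y2)) => H2 /= D2.
- by apply: phi1_inj.
- move=> E; have := out _ (phi1_in (cyc_u2 uu vv D2)).
  by rewrite -E (phi1_in H1).
- move=> E; have := out _ (phi1_in (cyc_u2 uu vv D1)).
  by rewrite E (phi1_in H2).
move/(congr1 u'); rewrite !uu' => /phi1_inj E.
have := E (cyc_u2 uu vv D1) (cyc_u2 uu vv D2).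
by move/(congr1 u); rewrite !uu.
Qed.

End Iso.

Lemma dih_swap n (u v : {perm 'I_n}) : dih_group v u = dih_group u v.
Proof. by apply: val_inj; rewrite /= setUC. Qed.

Definition descr n (u v : {perm 'I_n}) (O : {set 'I_n}) (t : nat) : Prop :=
  match t with
  | 1 => exists2 x0, O = orbit 'P (dih_group u v) x0 & ~~ fconnect (rr u v) x0 (u x0)
  | 2 | 3 => exists2 x0, O = orbit 'P (dih_group u v) x0 & u x0 = x0
  | 4 => exists2 x0, O = orbit 'P (dih_group v u) x0 & v x0 = x0
  | _ => False
  end.

Section Classify.
Variable n : nat.
Variables u v : {perm 'I_n}.
Hypothesis uu : forall x, u (u x) = x.
Hypothesis vv : forall x, v (v x) = x.
Local Notation r := (rr u v).
Local Notation O x := (orbit 'P (dih_group u v) x).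
Local Notation Osw x := (orbit 'P (dih_group v u) x).

Lemma fix_exists_odd y : u y = y -> odd #|O y| -> exists2 z, z \in O y & v z = z.
Proof.
move=> uy Ho; rewrite (fixA_card uu vv uy) in Ho.
have E : u y = iter (ford r y) r y by rewrite iter_order ?uy //; apply: r_inj.
exists (iter (ford r y)./2.+1 r y); last exact: (v_fix_exists uu vv E Ho).
by rewrite (dih_orbitE uu vv) fconnect_iter.
Qed.

End Classify.
Section Classify2.
Variable n : nat.
Variables u v : {perm 'I_n}.
Hypothesis uu : forall x, u (u x) = x.
Hypothesis vv : forall x, v (v x) = x.
Local Notation r := (rr u v).
Local Notation O x := (orbit 'P (dih_group u v) x).
Local Notation Osw x := (orbit 'P (dih_group v u) x).
Lemma classify x : descr u v (O x) (orbit_type u v (O x)).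
Proof.
case: (pickP [pred y | (y \in O x) && (u y == y)]) => [y /andP [yO /eqP uy] | nou].
  rewrite -(orbit_eqP yO) /orbit_type (nfix_u_A uu vv uy).
  case: (boolP (odd #|O y|)) => Ho.
    have [z zO vz] := fix_exists_odd uu vv uy Ho.
    have -> : nfix v (O y) = 1.
      rewrite -(orbit_eqP zO) -(dih_swap u v) (nfix_u_A vv uu vz).
      by rewrite (dih_swap u v) (orbit_eqP zO) Ho.
    by exists y.
  by rewrite (nfix_v_A_even uu vv uy Ho); exists y.
have nu : nfix u (O x) = 0.
  apply/eqP; rewrite cards_eq0; apply/eqP/setP => z; rewrite !inE.
  by have := nou z; rewrite /= => ->.
case: (pickP [pred y | (y \in O x) && (v y == y)]) => [y /andP [yO /eqP vy] | nov].
  have OE : O x = Osw y by rewrite (dih_swap u v) (orbit_eqP yO).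
  have He : ~~ odd #|Osw y|.
    apply/negP => Ho.
    have [z zO uz] := @fix_exists_odd _ v u vv uu y vy Ho.
    have := nou z; rewrite /= OE zO uz eqxx //.
  rewrite /orbit_type nu OE (nfix_u_A vv uu vy) (negbTE He).
  by exists y.
have nv : nfix v (O x) = 0.
  apply/eqP; rewrite cards_eq0; apply/eqP/setP => z; rewrite !inE.
  by have := nov z; rewrite /= => ->.
rewrite /orbit_type nu nv /=.
exists x => //; apply: (noFix uu vv).
  by move=> z zO; apply/negP => /eqP uz; have := nou z; rewrite /= zO uz eqxx.
by move=> z zO; apply/negP => /eqP vz; have := nov z; rewrite /= zO vz eqxx.
Qed.

End Classify2.

Definition ISO n (O O' : {set 'I_n}) (u v u' v' : {perm 'I_n}) : Prop :=
  exists phi : 'I_n -> 'I_n, [/\ {in O &, injective phi}, {in O, forall y, phi y \in O'},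
    {in O, forall y, phi (u y) = u' (phi y)} & {in O, forall y, phi (v y) = v' (phi y)}].

Lemma ISO_swap n (O O' : {set 'I_n}) u v u' v' : ISO O O' v u v' u' -> ISO O O' u v u' v'.
Proof. by case=> phi [H1 H2 H3 H4]; exists phi; split. Qed.

Section IsoOrbit.
Variable n : nat.
Variables u v u' v' : {perm 'I_n}.
Hypothesis uu : forall x, u (u x) = x.
Hypothesis vv : forall x, v (v x) = x.
Hypothesis uu' : forall x, u' (u' x) = x.
Hypothesis vv' : forall x, v' (v' x) = x.
Local Notation r := (rr u v).
Local Notation r' := (rr u' v').
Local Notation O x := (orbit 'P (dih_group u v) x).
Local Notation O' x := (orbit 'P (dih_group u' v') x).

Lemma isoA_orbit x0 x0' : u x0 = x0 -> u' x0' = x0' -> #|O x0| = #|O' x0'| ->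
  ISO (O x0) (O' x0') u v u' v'.
Proof.
move=> H H' Hc.
have ceq : ford r x0 = ford r' x0'.
  by rewrite -(fixA_card uu vv H) -(fixA_card uu' vv' H').
have Hu : forall y, fconnect r x0 y -> fconnect r x0 (u y).
  by move=> y Hy; have := cyc_u' uu vv Hy; rewrite H.
exists (phi1 u v u' v' x0 x0'); split.
- move=> y1 y2; rewrite !(fixA_mem uu vv H); exact: phi1_inj.
- by move=> y; rewrite (fixA_mem uu vv H) (fixA_mem uu' vv' H'); apply: phi1_in.
- by move=> y; rewrite (fixA_mem uu vv H) => Hy; apply: phi1_u.
move=> y; rewrite (fixA_mem uu vv H) => Hy.
rewrite (@v_ru _ u v uu) phi1_r ?Hu // (phi1_u uu vv uu' vv') //.
by rewrite (@v_ru _ u' v' uu').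
Qed.

Lemma isoB_orbit x0 x0' : ~~ fconnect r x0 (u x0) -> ~~ fconnect r' x0' (u' x0') ->
  #|O x0| = #|O' x0'| -> ISO (O x0) (O' x0') u v u' v'.
Proof.
move=> H H' Hc.
have ceq : ford r x0 = ford r' x0'.
  by apply: double_inj; rewrite -(caseB_card uu vv H) -(caseB_card uu' vv' H').
exists (phi2 u v u' v' x0 x0'); split.
- move=> y1 y2; rewrite !(dih_orbitE uu vv) => D1 D2.
  exact: (phi2_inj uu vv uu' vv' ceq H').
- by move=> y; rewrite (dih_orbitE uu vv) (dih_orbitE uu' vv'); apply: phi2_in.
- by move=> y; rewrite (dih_orbitE uu vv) => Hy; apply: phi2_u.
by move=> y; rewrite (dih_orbitE uu vv) => Hy; apply: phi2_v.
Qed.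

End IsoOrbit.

Lemma orbit_iso n (u v u' v' : {perm 'I_n})
  (uu : forall x, u (u x) = x) (vv : forall x, v (v x) = x)
  (uu' : forall x, u' (u' x) = x) (vv' : forall x, v' (v' x) = x) O O' :
  O \in dih_orbits u v -> O' \in dih_orbits u' v' ->
  orbit_type u v O = orbit_type u' v' O' -> #|O| = #|O'| -> ISO O O' u v u' v'.
Proof.
case/imsetP => x _ -> /imsetP [x' _ ->] Ht Hc.
move: (classify uu vv x) (classify uu' vv' x'); rewrite -Ht.
case: (orbit_type u v _) => [|[|[|[|[|t]]]]] //=.
- move=> [x0 E0 H0] [x0' E0' H0']; rewrite E0 E0' in Hc *.
  exact: isoB_orbit.
- move=> [x0 E0 H0] [x0' E0' H0']; rewrite E0 E0' in Hc *.
  exact: isoA_orbit.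
- move=> [x0 E0 H0] [x0' E0' H0']; rewrite E0 E0' in Hc *.
  exact: isoA_orbit.
move=> [x0 E0 H0] [x0' E0' H0']; rewrite E0 E0' in Hc *.
apply: ISO_swap; exact: isoA_orbit.
Qed.

Section OrbFacts.
Variable n : nat.
Variables u v : {perm 'I_n}.

Lemma orb_closed (s : {perm 'I_n}) O x : s \in dih_group u v -> O \in dih_orbits u v -> x \in O -> s x \in O.
Proof.
move=> sG /imsetP [y _ ->] xO.
rewrite -(orbit_eqP xO).
exact: (mem_orbit 'P x sG).
Qed.

Lemma orb_disj O1 O2 x : O1 \in dih_orbits u v -> O2 \in dih_orbits u v ->
  x \in O1 -> x \in O2 -> O1 = O2.
Proof.
move=> /imsetP [y1 _ ->] /imsetP [y2 _ ->] H1 H2.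
by rewrite -(orbit_eqP H1) -(orbit_eqP H2).
Qed.

Lemma orb_cover x : exists2 O, O \in dih_orbits u v & x \in O.
Proof. exists (orbit 'P (dih_group u v) x); [exact: imset_f | exact: orbit_refl]. Qed.

End OrbFacts.

Section Glue.
Variable n : nat.
Variables u v u' v' : {perm 'I_n}.
Hypothesis uu : forall x, u (u x) = x.
Hypothesis vv : forall x, v (v x) = x.
Hypothesis uu' : forall x, u' (u' x) = x.
Hypothesis vv' : forall x, v' (v' x) = x.

Definition key (a b : {perm 'I_n}) (O : {set 'I_n}) := (orbit_type a b O, #|O|).

Lemma glue (L L' : seq {set 'I_n}) : uniq L -> uniq L' ->
  {subset L <= dih_orbits u v} -> {subset L' <= dih_orbits u' v'} ->
  perm_eq (map (key u v) L) (map (key u' v') L') ->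
  exists f : 'I_n -> 'I_n,
    [/\ {in [pred x : 'I_n | has (fun O : {set 'I_n} => x \in O) L] &, injective f},
        {in [pred x : 'I_n | has (fun O : {set 'I_n} => x \in O) L], forall x, has (fun O : {set 'I_n} => f x \in O) L'},
        {in [pred x : 'I_n | has (fun O : {set 'I_n} => x \in O) L], forall x, f (u x) = u' (f x)} &
        {in [pred x : 'I_n | has (fun O : {set 'I_n} => x \in O) L], forall x, f (v x) = v' (f x)}].
Proof.
elim: L L' => [|O L1 IH] L' uL uL' sL sL' Hp.
  by exists id; split => x //; rewrite inE.
have : key u v O \in map (key u' v') L' by rewrite -(perm_mem Hp) mem_head.
case/mapP => O' O'L' kE.
have Hp1 : perm_eq (map (key u v) L1) (map (key u' v') (rem O' L')).
  have P2 := perm_map (key u' v') (perm_to_rem O'L').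
  rewrite -(perm_cons (key u v O)); apply: perm_trans Hp _.
  by rewrite kE.
move: uL => /= /andP [OL1 uL1].
have sL1 : {subset L1 <= dih_orbits u v} by move=> X XL; apply: sL; rewrite inE XL orbT.
have sR : {subset rem O' L' <= dih_orbits u' v'} by move=> X /mem_rem; apply: sL'.
have [f1 [I1 M1 U1 V1]] := IH _ uL1 (rem_uniq _ uL') sL1 sR Hp1.
have OO : O \in dih_orbits u v by apply: sL; rewrite mem_head.
have OO' : O' \in dih_orbits u' v' by apply: sL'.
case: kE => Ht Hc.
have [phi [PI PM PU PV]] := orbit_iso uu vv uu' vv' OO OO' Ht Hc.
have uG : u \in dih_group u v by rewrite mem_gen // set21.
have vG : v \in dih_group u v by rewrite mem_gen // set22.
have notO : forall (s : {perm 'I_n}), s \in dih_group u v -> (forall x, s (s x) = x) ->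
    forall x, x \notin O -> s x \notin O.
  move=> s sG ss x xO; apply/negP => H; move/negP: xO; apply; rewrite -(ss x); exact: (orb_closed sG OO H).
have covL1 : forall (s : {perm 'I_n}), s \in dih_group u v ->
    forall x : 'I_n, has (fun O : {set 'I_n} => x \in O) L1 -> has (fun O : {set 'I_n} => s x \in O) L1.
  move=> s sG x /hasP [X XL xX]; apply/hasP; exists X => //.
  exact: (orb_closed sG (sL1 _ XL) xX).
have disj' : forall y : 'I_n, y \in O' -> ~~ has (fun O : {set 'I_n} => y \in O) (rem O' L').
  move=> y yO'; apply/hasP => [[X XL yX]].
  have XE : X = O' by apply: (orb_disj (sR _ XL) OO' yX yO').
  by move: XL; rewrite XE mem_rem_uniqF.
exists (fun x => if x \in O then phi x else f1 x); split.
- move=> x y; rewrite !inE /=.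
  case: (boolP (x \in O)) => xO; case: (boolP (y \in O)) => yO //= Hx Hy.
  + exact: PI.
  + move=> E; have := disj' _ (PM _ xO); by rewrite E M1.
  + move=> E; have := disj' _ (PM _ yO); by rewrite -E M1.
  + exact: I1.
- move=> x; rewrite inE /=; case: (boolP (x \in O)) => xO /= Hx.
    by apply/hasP; exists O' => //; apply: PM.
  have /hasP [X XL fX] := M1 _ Hx; apply/hasP; exists X => //.
  exact: (mem_rem XL).
- move=> x; rewrite inE /=; case: (boolP (x \in O)) => xO /= Hx.
    by rewrite (orb_closed uG OO xO) PU.
  by rewrite (negbTE (notO _ uG uu _ xO)) U1 // inE covL1.
move=> x; rewrite inE /=; case: (boolP (x \in O)) => xO /= Hx.
  by rewrite (orb_closed vG OO xO) PV.
by rewrite (negbTE (notO _ vG vv _ xO)) V1 // inE covL1.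
Qed.

End Glue.

Lemma sort_perm (s : seq nat) : perm_eq (sort leq s) s.
Proof. by rewrite perm_sort. Qed.

Section Counting.
Variable n : nat.
Variables u v : {perm 'I_n}.
Hypothesis uu : forall x, u (u x) = x.
Hypothesis vv : forall x, v (v x) = x.

Lemma type_range O : O \in dih_orbits u v -> 0 < orbit_type u v O < 5.
Proof.
case/imsetP => x _ ->; have := classify uu vv x.
by case: (orbit_type u v _) => [|[|[|[|[|t]]]]].
Qed.

Lemma cnt_key t k :
  count_mem (t, k) (map (key u v) (enum (dih_orbits u v))) =
  if 0 < t < 5 then count_mem k (sizes_of_type u v t) else 0.
Proof.
rewrite count_map; case: ifP => Ht.
  rewrite /sizes_of_type (seq.permP (sort_perm _)) count_map.
  have P : perm_eq [seq O <- enum (dih_orbits u v) | orbit_type u v O == t]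
                   (enum [set O in dih_orbits u v | orbit_type u v O == t]).
    apply: uniq_perm; first by rewrite filter_uniq ?enum_uniq.
      exact: enum_uniq.
    by move=> O; rewrite mem_filter !mem_enum inE andbC.
  rewrite -(seq.permP P) [RHS]count_filter; apply: eq_count => O /=.
  by rewrite /key xpair_eqE andbC.
rewrite (eq_in_count (a2 := pred0)) ?count_pred0 // => O; rewrite mem_enum => HO /=.
rewrite /key xpair_eqE; apply/negP => /andP [/eqP E _].
by move: Ht; rewrite -E type_range.
Qed.

End Counting.

Section Conj.
Variable n : nat.
Variables u v u' v' g : {perm 'I_n}.
Hypothesis uu : forall x, u (u x) = x.
Hypothesis vv : forall x, v (v x) = x.
Hypothesis uu' : forall x, u' (u' x) = x.
Hypothesis vv' : forall x, v' (v' x) = x.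
Hypothesis H1 : forall x, u' x = g (u (g^-1%g x)).
Hypothesis H2 : forall x, v' x = g (v (g^-1%g x)).

Lemma E1 y : u' (g y) = g (u y). Proof. by rewrite H1 permK. Qed.
Lemma E2 y : v' (g y) = g (v y). Proof. by rewrite H2 permK. Qed.

Lemma iter_g j y : iter j (rr u' v') (g y) = g (iter j (rr u v) y).
Proof. elim: j => [//|j IH]; by rewrite !iterS IH /rr E1 E2. Qed.

Lemma fconnect_g a b : fconnect (rr u' v') (g a) (g b) = fconnect (rr u v) a b.
Proof.
apply/idP/idP.
  case/fconnectP => j _; rewrite iter_g => /perm_inj ->; exact: fconnect_iter.
case/fconnectP => j _ ->; rewrite -iter_g; exact: fconnect_iter.
Qed.

Lemma orbit_g x : orbit 'P (dih_group u' v') (g x) = g @: orbit 'P (dih_group u v) x.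
Proof.
apply/setP => y; rewrite -[y](permKV g) mem_imset ?perm_inj //.
rewrite (dih_orbitE uu' vv') (dih_orbitE uu vv) E1 !fconnect_g //.
exact: perm_inj.
Qed.

Lemma orbs_g : dih_orbits u' v' = (fun O : {set 'I_n} => g @: O) @: dih_orbits u v.
Proof.
apply/setP => O'; apply/imsetP/imsetP.
  case=> x' _ ->; exists (orbit 'P (dih_group u v) (g^-1%g x')); first exact: imset_f.
  by rewrite -orbit_g permKV.
case=> O /imsetP [x _ ->] ->; exists (g x) => //; by rewrite orbit_g.
Qed.

Lemma nfix_g (s s' : {perm 'I_n}) (O : {set 'I_n}) : (forall y, s' (g y) = g (s y)) ->
  nfix s' (g @: O) = nfix s O.
Proof.
move=> Es; rewrite /nfix -[RHS](card_imset _ (@perm_inj _ g)); apply: eq_card => y.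
have gi := @perm_inj _ g.
rewrite -[y](permKV g) mem_imset // !inE mem_imset //.
by rewrite Es (inj_eq gi).
Qed.

Lemma type_g (O : {set 'I_n}) : orbit_type u' v' (g @: O) = orbit_type u v O.
Proof. by rewrite /orbit_type (nfix_g O E1) (nfix_g O E2). Qed.

Lemma sizes_g t : sizes_of_type u v t = sizes_of_type u' v' t.
Proof.
rewrite /sizes_of_type; apply/perm_sortP; [exact: leq_total|exact: leq_trans|exact: anti_leq|].
set F := fun O : {set 'I_n} => g @: O.
have Finj : injective F by apply: imset_inj; apply: perm_inj.
have -> : [set O in dih_orbits u' v' | orbit_type u' v' O == t] =
          F @: [set O in dih_orbits u v | orbit_type u v O == t].
  apply/setP => O'; rewrite inE orbs_g; apply/andP/imsetP.
    case=> /imsetP [O OO ->]; rewrite type_g => Ht; exists O => //; by rewrite inE OO.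
  by case=> O; rewrite inE => /andP [OO Ht] ->; rewrite imset_f // type_g.
have P : perm_eq (enum (F @: [set O in dih_orbits u v | orbit_type u v O == t]))
                 (map F (enum [set O in dih_orbits u v | orbit_type u v O == t])).
  apply: uniq_perm; first exact: enum_uniq.
    by rewrite (map_inj_uniq Finj) enum_uniq.
  move=> O'; rewrite mem_enum; apply/imsetP/mapP => -[O]; rewrite ?mem_enum => HO ->;
  by exists O; rewrite ?mem_enum.
rewrite perm_sym; apply: perm_trans (perm_map _ P) _; rewrite -map_comp.
rewrite (@eq_map _ _ _ (fun O : {set 'I_n} => #|O|)) // => O /=.
by rewrite card_imset //; apply: perm_inj.
Qed.

End Conj.

Unset Implicit Arguments.
Theorem lemma5p3 (n : nat) (s1 s2 s1' s2' : {perm 'I_n}) :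
  involutive_perm s1 -> involutive_perm s2 ->
  involutive_perm s1' -> involutive_perm s2' ->
  ((exists g : {perm 'I_n},
      (forall x, s1' x = g (s1 (g^-1%g x))) /\
      (forall x, s2' x = g (s2 (g^-1%g x))))
   <-> dihedral_decomposition s1 s2 = dihedral_decomposition s1' s2').
Proof.
have inv : forall s : {perm 'I_n}, involutive_perm s -> forall x, s (s x) = x.
  by move=> s Hs x; rewrite -permM Hs perm1.
move=> /inv uu /inv vv /inv uu' /inv vv'.
split.
  case=> g [H1 H2]; rewrite /dihedral_decomposition /=.
  by rewrite !(sizes_g uu vv uu' vv' H1 H2).
move=> Hd.
have Hs : forall t, 0 < t < 5 -> sizes_of_type s1 s2 t = sizes_of_type s1' s2' t.
  move: Hd; rewrite /dihedral_decomposition /= => -[E1 E2 E3 E4].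
  by case=> [|[|[|[|[|t]]]]].
have Hp : perm_eq (map (key s1 s2) (enum (dih_orbits s1 s2)))
                  (map (key s1' s2') (enum (dih_orbits s1' s2'))).
  rewrite /perm_eq; apply/allP => -[t k] _ /=.
  rewrite (cnt_key uu vv) (cnt_key uu' vv'); case: ifP => // /Hs ->; by [].
have sub1 : {subset enum (dih_orbits s1 s2) <= dih_orbits s1 s2} by move=> O; rewrite mem_enum.
have sub2 : {subset enum (dih_orbits s1' s2') <= dih_orbits s1' s2'} by move=> O; rewrite mem_enum.
have [f [I M U V]] := glue uu vv uu' vv' (enum_uniq _) (enum_uniq _) sub1 sub2 Hp.
have cov : forall x, x \in [pred x : 'I_n | has (fun O : {set 'I_n} => x \in O) (enum (dih_orbits s1 s2))].
  move=> x; rewrite inE; have [O OO xO] := orb_cover s1 s2 x.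
  by apply/hasP; exists O; rewrite ?mem_enum.
have finj : injective f by move=> a b; apply: I; apply: cov.
exists (perm finj); split => x.
  by rewrite -{1}[x](permKV (perm finj)) !permE U ?cov.
by rewrite -{1}[x](permKV (perm finj)) !permE V ?cov.
Qed.
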